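(* Let $m,n\geq 1$ and let $c_0:V(K_{m,n})\to\mathbb{Z}$ be any initial chip configuration on the complete bipartite graph $K_{m,n}$. Then the sequence of configurations $(c_t)_{t\ge0}$ produced by the diffusion process is eventually periodic, i.e. there exist $t\geq 0$ and $p\geq 1$ with $c_{t+p}=c_t$.
   Context: Diffusion process: for a finite simple graph $G$ and a chip configuration $c_t:V(G)\to\mathbb{Z}$ (negative values allowed), the next configuration is defined simultaneously for every vertex $u$ by $c_{t+1}(u)=c_t(u)-|\{w\in N(u): c_t(u)>c_t(w)\}|+|\{w\in N(u): c_t(u)<c_t(w)\}|$. *)

(* Defs.v *)
From mathcomp Require Import all_boot all_order all_algebra.
Set Implicit Arguments. Unset Strict Implicit. Unset Printing Implicit Defensive.
Import Order.TTheory GRing.Theory Num.Theory.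
Local Open Scope ring_scope.

Definition simple_graph (T : finType) (e : rel T) : Prop :=
  symmetric e /\ irreflexive e.

Definition diffuse_step (T : finType) (e : rel T) (c : T -> int) : T -> int :=
  fun u => c u - (#|[set w | e u w & c w < c u]|)%:Z
               + (#|[set w | e u w & c u < c w]|)%:Z.

Definition diffuse (T : finType) (e : rel T) (c0 : T -> int) (t : nat) : T -> int :=
  iter t (diffuse_step e) c0.

Definition Kmn_adj (m n : nat) : rel ('I_m + 'I_n)%type :=
  fun x y => match x, y with
             | inl _, inr _ | inr _, inl _ => true
             | _, _ => false
             end.

Lemma Kmn_simple (m n : nat) : simple_graph (@Kmn_adj m n).
Proof. by split; [case=> x; case=> y | case=> x]. Qed.

(* Main.v *)
Require Import Defs.
From mathcomp Require Import all_boot all_order all_algebra.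
From mathcomp Require Import zify.
Set Implicit Arguments. Unset Strict Implicit. Unset Printing Implicit Defensive.
Module Aux.
Import Order.TTheory GRing.Theory Num.Theory.
Local Open Scope ring_scope.

Section Gen.
Variables (T : finType) (e : rel T) (he : symmetric e).

Definition dd (c : T -> int) v w : int :=
  if e v w then (if c v < c w then 1 else if c w < c v then -1 else 0) else 0.
Definition delta c v := \sum_w dd c v w.
Definition W2 (c : T -> int) := \sum_v \sum_w (if e v w then `|c v - c w| else 0).
Definition En (c : T -> int) := \sum_v c v * c v.

Lemma card_setZ (P : pred T) :
  (#|[set w | P w]|)%:Z = \sum_w (if P w then 1 else 0 : int).
Proof.
rewrite -sum1_card big_mkcond /=.
rewrite (big_morph Posz PoszD (erefl _)).
by apply: eq_bigr => i _; rewrite inE; case: (P i).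
Qed.

Lemma step_eq c v : diffuse_step e c v = c v + delta c v.
Proof.
rewrite /diffuse_step !card_setZ /delta -addrA; congr (_ + _).
rewrite addrC -sumrB; apply: eq_bigr => w _; rewrite /dd.
case: (e v w) => /=; last by rewrite subr0.
by case: ltrgtP.
Qed.

Lemma dd_anti c v w : dd c w v = - dd c v w.
Proof. rewrite /dd he; case: (e v w); last by rewrite oppr0.
by case: ltrgtP => //= _; rewrite ?opprK ?oppr0.
Qed.

Lemma sum_delta c : \sum_v delta c v = 0.
Proof.
have h : \sum_v delta c v = - \sum_v delta c v.
  rewrite /delta [LHS]exchange_big /= -sumrN; apply: eq_bigr => w _.
  rewrite -sumrN; apply: eq_bigr => v _. exact: dd_anti.
lia.
Qed.

Lemma cross c : 2 * \sum_v c v * delta c v = - W2 c.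
Proof.
set X := \sum_v _.
have h1 : X = \sum_v \sum_w c v * dd c v w.
  by apply: eq_bigr => v _; rewrite mulr_sumr.
have h2 : X = \sum_v \sum_w (- c w * dd c v w).
  rewrite h1 exchange_big /=; apply: eq_bigr => v _; apply: eq_bigr => w _.
  by rewrite dd_anti mulrN mulNr.
have -> : 2 * X = X + X by rewrite mulr2n mulrDl mul1r.
rewrite {1}h1 h2 -big_split /= /W2 -sumrN; apply: eq_bigr => v _.
rewrite -big_split /= -sumrN; apply: eq_bigr => w _.
rewrite /dd; case: (e v w) => /=; last by rewrite !mulr0 oppr0 addr0.
case: ltrgtP => h; lia.
Qed.

Lemma En_step c : En (fun v => c v + delta c v) =
  En c - W2 c + \sum_v delta c v * delta c v.
Proof.
have: En (fun v => c v + delta c v) =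
  En c + 2 * \sum_v c v * delta c v + \sum_v delta c v * delta c v.
  rewrite /En mulr_sumr -!big_split /=; apply: eq_bigr => v _; lia.
by rewrite cross.
Qed.

Lemma delta_bound c v : `|delta c v| <= #|T|%:Z.
Proof.
apply: le_trans (ler_norm_sum _ _ _) _.
have -> : (#|T|%:Z) = \sum_(w : T) (1:int).
  rewrite sumr_const; change #|xpredT| with #|T|; lia.
apply: ler_sum => w _; rewrite /dd; case: (e v w) => //=; case: ltrgtP => //.
Qed.

Lemma delta_sq c : \sum_v delta c v * delta c v <= (#|T| * #|T| * #|T|)%:Z.
Proof.
have -> : ((#|T| * #|T| * #|T|)%:Z) = \sum_(w : T) (#|T| * #|T|)%:Z.
  rewrite sumr_const; change #|xpredT| with #|T|; rewrite -mulr_natr natz; lia.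
apply: ler_sum => w _; have := delta_bound c w; nia.
Qed.
Lemma sum_const_int (k : int) : \sum_(w : T) k = #|T|%:Z * k.
Proof. by rewrite sumr_const; change #|xpredT| with #|T|; rewrite -mulr_natl natz. Qed.

Lemma le_sum_term (F : T -> int) j : (forall i, 0 <= F i) -> F j <= \sum_i F i.
Proof. by move=> h; rewrite (bigD1 j) //= lerDl sumr_ge0. Qed.

Lemma sum_step c : \sum_v (c v + delta c v) = \sum_v c v.
Proof. by rewrite big_split /= sum_delta addr0. Qed.

Lemma En_ge0 c : 0 <= En c.
Proof. by apply: sumr_ge0 => v _; rewrite -expr2 sqr_ge0. Qed.

Lemma W2_ge0 c : 0 <= W2 c.
Proof. by apply: sumr_ge0 => v _; apply: sumr_ge0 => w _; case: (e v w). Qed.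

Lemma term_W2 c u v : e u v -> `|c u - c v| <= W2 c.
Proof.
move=> huv; rewrite /W2.
apply: le_trans (@le_sum_term (fun i => \sum_w (if e i w then `|c i - c w| else 0)) u _); last first.
  by move=> i; apply: sumr_ge0 => w _; case: (e i w).
apply: le_trans (@le_sum_term (fun w => if e u w then `|c u - c w| else 0) v _).
  by rewrite huv.
by move=> w; case: (e u w).
Qed.

Lemma sq_le_En c v : c v * c v <= En c.
Proof. by apply: (@le_sum_term (fun v => c v * c v)) => i; rewrite -expr2 sqr_ge0. Qed.

Lemma En_le c X : (forall v, `|c v| <= X) -> En c <= #|T|%:Z * (X * X).
Proof.
move=> h.
have -> : #|T|%:Z * (X * X) = \sum_(w : T) (X * X).
  by rewrite sum_const_int.
apply: ler_sum => w _; have hx : c w * c w = `|c w| * `|c w| by rewrite -normrM ger0_norm // -expr2 sqr_ge0.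
by rewrite hx; apply: ler_pM => //; apply: h.
Qed.
End Gen.

Lemma tri3 (x y z W : int) : `|x - y| <= W -> `|y - z| <= W -> `|x - z| <= 2 * W.
Proof. move=> h1 h2; lia. Qed.
Lemma tri1 (x y W : int) : `|x - y| <= W -> 0 <= W -> `|x - y| <= 2 * W.
Proof. move=> h1 h2; lia. Qed.
Lemma tri1' (x y W : int) : `|y - x| <= W -> 0 <= W -> `|x - y| <= 2 * W.
Proof. move=> h1 h2; lia. Qed.

Section Kmn.
Variables (m n : nat) (hm : (1 <= m)%N) (hn : (1 <= n)%N).
Notation T := ('I_m + 'I_n)%type.
Notation e := (@Kmn_adj m n).

Lemma vals_close (c : T -> int) u v : `|c u - c v| <= 2 * W2 e c.
Proof.
have a0 : 'I_m := Ordinal hm.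
have b0 : 'I_n := Ordinal hn.
have W0 := W2_ge0 e c.
case: u => [a|b]; case: v => [a'|b'].
- have h1 := @term_W2 _ e c (inl a) (inr b0) erefl.
  have h2 := @term_W2 _ e c (inr b0) (inl a') erefl. exact: tri3 h1 h2.
- have h1 := @term_W2 _ e c (inl a) (inr b') erefl. exact: tri1 h1 W0.
- have h1 := @term_W2 _ e c (inr b) (inl a') erefl. exact: tri1 h1 W0.
- have h1 := @term_W2 _ e c (inr b) (inl a0) erefl.
  have h2 := @term_W2 _ e c (inl a0) (inr b') erefl. exact: tri3 h1 h2.
Qed.

Lemma cardT_gt0 : (0 < #|{: T}|)%N.
Proof. by apply/card_gt0P; exists (inl (Ordinal hm)). Qed.

Lemma val_bound (c : T -> int) u :
  `|c u| <= `|\sum_v c v| + 2 * #|{: T}|%:Z * W2 e c.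
Proof.
have hN := cardT_gt0.
have h1 : #|{: T}|%:Z * c u = \sum_v c v + \sum_v (c u - c v).
  by rewrite sumrB addrC subrK sum_const_int.
have h2 : `|\sum_v (c u - c v)| <= #|{: T}|%:Z * (2 * W2 e c).
  apply: le_trans (ler_norm_sum _ _ _) _.
  have -> : #|{: T}|%:Z * (2 * W2 e c) = \sum_(w : T) (2 * W2 e c).
    by rewrite sum_const_int.
  by apply: ler_sum => w _; apply: vals_close.
have h3 : `|#|{: T}|%:Z * c u| <= `|\sum_v c v| + #|{: T}|%:Z * (2 * W2 e c).
  by rewrite h1; apply: le_trans (ler_normD _ _) _; rewrite lerD2l.
have W0 := W2_ge0 e c.
nia.
Qed.
End Kmn.


Lemma arith0 (E0 P K : int) : 0 <= P -> 0 <= K -> E0 <= E0 + P + K.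
Proof. move=> *; lia. Qed.
Lemma arith1 (E W D K B : int) : E <= B -> D <= K -> K < W -> E - W + D <= B.
Proof. move=> *; lia. Qed.
Lemma arith2 (E W D K E0 P : int) : E <= P -> 0 <= W -> D <= K -> 0 <= E0 ->
  E - W + D <= E0 + P + K.
Proof. move=> *; lia. Qed.

Section Main.
Variables (m n : nat) (hm : (1 <= m)%N) (hn : (1 <= n)%N).
Notation T := ('I_m + 'I_n)%type.
Notation e := (@Kmn_adj m n).
Variable c0 : T -> int.
Let he : symmetric e := (Kmn_simple m n).1.
Let c t := diffuse e c0 t.

Lemma c_succ t v : c t.+1 v = c t v + delta e (c t) v.
Proof. by rewrite /c /diffuse iterS step_eq. Qed.

Lemma c_sum t : \sum_v c t v = \sum_v c0 v.
Proof.
elim: t => [//|t IH]; rewrite -IH -(sum_step he (c t)).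
by apply: eq_bigr => v _; rewrite c_succ.
Qed.

Lemma c_En t : En (c t.+1) = En (c t) - W2 e (c t) + \sum_v delta e (c t) v * delta e (c t) v.
Proof.
rewrite -(En_step he); apply: eq_bigr => v _; by rewrite c_succ.
Qed.

Definition KK : int := (#|{: T}| * #|{: T}| * #|{: T}|)%:Z.
Definition XX : int := `|\sum_v c0 v| + 2 * #|{: T}|%:Z * KK.
Definition Bnd : int := En c0 + #|{: T}|%:Z * (XX * XX) + KK.

Lemma En_bound t : En (c t) <= Bnd.
Proof.
have hK : 0 <= KK by [].
have hN : 0 <= #|{: T}|%:Z by [].
have hXX : 0 <= #|{: T}|%:Z * (XX * XX) by rewrite mulr_ge0 // -expr2 sqr_ge0.
have hE0 := En_ge0 c0.
elim: t => [|t IH]; first by rewrite /Bnd /c /=; apply: arith0.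
rewrite c_En.
have hD := delta_sq e (c t).
have hW := W2_ge0 e (c t).
case: (leP (W2 e (c t)) KK) => hWK; last first.
  exact: arith1 IH hD hWK.
have hv : forall v, `|c t v| <= XX.
  move=> v; apply: le_trans (val_bound hm hn (c t) v) _.
  rewrite c_sum /XX lerD2l; apply: ler_wpM2l => //.
exact: arith2 (En_le hv) hW hD hE0.
Qed.
Lemma abs_le_sq (x : int) : `|x| <= x * x.
Proof. nia. Qed.

Lemma c_bound t v : `|c t v| <= Bnd.
Proof.
apply: le_trans (abs_le_sq _) _; apply: le_trans (sq_le_En _ v) _.
exact: En_bound.
Qed.

Lemma Bnd_ge0 : 0 <= Bnd.
Proof. apply: le_trans (En_bound 0); exact: En_ge0. Qed.

Lemma dec_lemma (M : nat) (x : int) : `|x| <= M%:Z ->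
  x = (nat_of_ord (inord (absz (x + M%:Z)) : 'I_(2 * M).+1))%:Z - M%:Z.
Proof. move=> h; rewrite inordK; lia. Qed.

Lemma periodic : exists t p : nat, (1 <= p)%N /\ (forall v, diffuse e c0 (t + p)%N v = diffuse e c0 t v).
Proof.
pose M := absz Bnd.
have hM : forall t v, `|c t v| <= M%:Z.
  by move=> t v; rewrite /M gez0_abs ?Bnd_ge0 //; exact: c_bound.
pose F := {ffun T -> 'I_(2 * M).+1}.
pose f (i : 'I_#|{: F}|.+1) : F := [ffun v => inord (absz (c i v + M%:Z))].
have hdec : forall i v, c (nat_of_ord i) v = (nat_of_ord (f i v))%:Z - M%:Z.
  by move=> i v; rewrite /f ffunE; apply: dec_lemma.
case: (boolP [exists i, exists j, (nat_of_ord i < nat_of_ord j)%N && (f i == f j)]).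
  move=> /existsP [i /existsP [j /andP [hij /eqP hf]]].
  exists i, (j - i)%N; split; first by rewrite subn_gt0.
  rewrite subnKC; last exact: ltnW.
  by move=> v; rewrite -/(c j v) -/(c i v) !hdec hf.
move=> hne; exfalso.
have inj : injective f.
  move=> i j hf; case: (ltngtP i j) => h.
  - by case/negP: hne; apply/existsP; exists i; apply/existsP; exists j; rewrite h hf eqxx.
  - by case/negP: hne; apply/existsP; exists j; apply/existsP; exists i; rewrite h hf eqxx.
  - exact: val_inj.
by have := leq_card f inj; rewrite card_ord ltnn.
Qed.
End Main.
End Aux.

Theorem theorem13 (m n : nat) (hm : (1 <= m)%N) (hn : (1 <= n)%N)
    (c0 : ('I_m + 'I_n)%type -> int) :
  exists t p : nat, (1 <= p)%N /\
    diffuse (@Kmn_adj m n) c0 (t + p) =1 diffuse (@Kmn_adj m n) c0 t.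
Proof. exact: Aux.periodic. Qed.
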